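(* Let $(A,\circ_A)$ be a Leibniz algebra and $(l,r,V)$ a representation of it. Every invertible anti-$\mathcal O$-operator $T:V\to A$ of $(A,\circ_A)$ associated to $(l,r,V)$ is strong.
   Context: All vector spaces are finite-dimensional over a field $\mathbb K$ of characteristic zero. A Leibniz algebra is a vector space $A$ with a multiplication $\circ_A$ satisfying $x\circ_A(y\circ_A z)=(x\circ_A y)\circ_A z+y\circ_A(x\circ_A z)$. A representation of $(A,\circ_A)$ is a triple $(l,r,V)$ with linear maps $l,r:A\to\mathrm{End}(V)$ such that for all $x,y\in A,v\in V$: $l(x\circ_A y)v=l(x)l(y)v-l(y)l(x)v$; $r(x\circ_A y)v=l(x)r(y)v-r(y)l(x)v$; $r(y)l(x)v=-r(y)r(x)v$. An anti-$\mathcal O$-operator of $(A,\circ_A)$ associated to $(l,r,V)$ is a linear map $T:V\to A$ with $(Tu)\circ_A(Tv)=-T\big(l(Tu)v+r(Tv)u\big)$ for all $u,v\in V$; it is strong if moreover $l\big((Tu)\circ_A(Tv)\big)w+r\big((Tu)\circ_A(Tw)\big)v-r\big((Tv)\circ_A(Tw)\big)u=0$ for all $u,v,w\in V$. *)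

(* Defs.v *)
From HB Require Import structures.
From mathcomp Require Import all_boot all_order all_algebra.
Set Implicit Arguments. Unset Strict Implicit. Unset Printing Implicit Defensive.
Import GRing.Theory.
Local Open Scope ring_scope.

Definition bilinear_mul (K : fieldType) (A : vectType K) (mul : A -> A -> A) :=
  (forall x, linear (mul x)) /\ (forall y, linear (fun x => mul x y)).

Definition leibniz_identity (K : fieldType) (A : vectType K) (mul : A -> A -> A) :=
  forall x y z, mul x (mul y z) = mul (mul x y) z + mul y (mul x z).

Definition is_leibniz_algebra (K : fieldType) (A : vectType K) (mul : A -> A -> A) :=
  bilinear_mul mul /\ leibniz_identity mul.

Definition is_leibniz_rep (K : fieldType) (A V : vectType K) (mul : A -> A -> A)
    (l r : A -> 'End(V)) :=
  [/\ linear l, linear r,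
      forall x y v, l (mul x y) v = l x (l y v) - l y (l x v),
      forall x y v, r (mul x y) v = l x (r y v) - r y (l x v) &
      forall x y v, r y (l x v) = - r y (r x v)].

Definition is_anti_O_operator (K : fieldType) (A V : vectType K) (mul : A -> A -> A)
    (l r : A -> 'End(V)) (T : 'Hom(V, A)) :=
  forall u v, mul (T u) (T v) = - T (l (T u) v + r (T v) u).

Definition is_strong_anti_O_operator (K : fieldType) (A V : vectType K)
    (mul : A -> A -> A) (l r : A -> 'End(V)) (T : 'Hom(V, A)) :=
  is_anti_O_operator mul l r T /\
  forall u v w, l (mul (T u) (T v)) w + r (mul (T u) (T w)) v
                - r (mul (T v) (T w)) u = 0.

(* Main.v *)
Require Import Defs.
From HB Require Import structures.
From mathcomp Require Import all_boot all_order all_algebra.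
Import GRing.Theory.
Local Open Scope ring_scope.

Lemma L1 (M : zmodType) (X Y a b c d e f : M) :
  -X+a+b-Y+c+d-(-(X+Y)+e+f) = a+b+c+d-e-f.
Proof.
apply/eqP; rewrite -subr_eq0; apply/eqP.
rewrite !opprD !opprK.
rewrite [LHS](AC (6*4*6) ((1*7)*(2*11)*(3*12)*(4*8)*(5*13)*(6*14)*(9*15)*(10*16)))%AC /=.
by rewrite !(addNr, addrN) !addr0.
Qed.

Lemma L2 (M : zmodType) (p1 p2 p3 p4 p5 p6 : M) :
  (p5-p3)+(p6-p1)-(p4+p2) = -(p1+p2+p3+p4-p5-p6).
Proof.
apply/eqP; rewrite -subr_eq0; apply/eqP.
rewrite !opprD !opprK.
rewrite [LHS](AC (2*2*2*6) ((1*11)*(2*9)*(3*12)*(4*7)*(5*10)*(6*8)))%AC /=.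
by rewrite !(addNr, addrN) !addr0.
Qed.

Lemma linD_gen (K : fieldType) (U W : lmodType K) (f : U -> W) :
  linear f -> forall x y, f (x + y) = f x + f y.
Proof. by move=> lf x y; have := lf 1 x y; rewrite !scale1r. Qed.

Lemma linN_gen (K : fieldType) (U W : lmodType K) (f : U -> W) :
  linear f -> forall x, f (- x) = - f x.
Proof.
move=> lf x.
have lD := @linD_gen K U W f lf.
have f0 : f 0 = 0.
  by apply: (@addrI _ (f 0)); rewrite addr0 -lD addr0.
by apply: (@addrI _ (f x)); rewrite -lD !subrr f0.
Qed.

Theorem proposition2p10 (K : fieldType) (charK0 : [pchar K] =i pred0)
    (A V : vectType K) (mul : A -> A -> A) (l r : A -> 'End(V))
    (T : 'Hom(V, A)) :
  is_leibniz_algebra mul ->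
  is_leibniz_rep mul l r ->
  bijective T ->
  is_anti_O_operator mul l r T ->
  is_strong_anti_O_operator mul l r T.
Proof.
move=> [_ leib] [linl linr lmul rmul rl] /bij_inj Tinj anti.
split=> // u v w.
have TD : forall p q, T (p + q) = T p + T q by move=> p q; exact: linearD.
have TN : forall p, T (- p) = - T p by move=> p; exact: linearN.
have TB : forall p q, T (p - q) = T p - T q by move=> p q; rewrite TD TN.
have fND : forall (f : 'End(V)) p q, f (- (p + q)) = - (f p + f q)
  by move=> f p q; rewrite linearN linearD.
set x := T u; set y := T v; set z := T w.
set a1 := -(l x v + r y u).
set a2 := -(l x w + r z u).
set a3 := -(l y w + r z v).
have Ea1 : mul x y = T a1 by rewrite anti linearN.
have Ea2 : mul x z = T a2 by rewrite anti linearN.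
have Ea3 : mul y z = T a3 by rewrite anti linearN.
have Ts1 : T (l (T a1) w) = - mul (T a1) z - T (r z a1).
  by rewrite anti linearD opprK addrK.
have Ts2 : T (r (T a2) v) = - mul y (T a2) - T (l y a2).
  by rewrite anti linearD opprK [X in X - _]addrC addrK.
have Ts3 : T (r (T a3) u) = - mul x (T a3) - T (l x a3).
  by rewrite anti linearD opprK [X in X - _]addrC addrK.
set S := l (mul x y) w + r (mul x z) v - r (mul y z) u.
have HS : S = -(r z (l x v) + r z (r y u) + l y (l x w) + l y (r z u)
                - l x (l y w) - l x (r z v)).
  rewrite /S lmul !rmul (rl y z u) -L2.
  by rewrite opprK.
have TS : T S = T (r z (l x v) + r z (r y u) + l y (l x w) + l y (r z u)
                - l x (l y w) - l x (r z v)).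
  rewrite /S Ea1 Ea2 Ea3 TB TD Ts1 Ts2 Ts3 -Ea1 -Ea2 -Ea3 (leib x y z).
  rewrite /a1 /a2 /a3 !fND !TN !TD !TN !opprK !addrA.
  by rewrite L1.
have e : T S = - T S by rewrite {2}HS TN opprK TS.
have T0 : T S = 0.
  have h2 : (2%:R : K) != 0 by move/pcharf0P: charK0 => ->.
  have h : (2%:R : K) *: T S = 0 by rewrite scaler_nat mulr2n {1}e addNr.
  by move/eqP: h; rewrite scaler_eq0 (negbTE h2) /= => /eqP.
apply: Tinj; by rewrite T0 linear0.
Qed.
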